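(* Let $K\in{\rm Alg}(V)$ be a cubic cyclic Galois field extension of $F$ with ${\rm Gal}(K/F)=\langle\tau\rangle$, and let $(f,g)\in{\rm Gl}(V)\times{\rm Gl}(V)$. Then there exists $(f',g')\in{\rm Gl}(V)\times{\rm Gl}(V)$ with $K^{(f,g)}\cong K^{(f',g')}$ such that $f'$ has exactly one of the following forms: (1) $f'={\rm id}+L(y_1)\tau+L(y_2)\tau^2$ with $y_1,y_2\in K^\times$ and $N(y_1)+N(y_2)-T(\tau(y_1)\tau^2(y_2))\ne-1$; (2) $f'={\rm id}+L(y_2)\tau^2$ with $y_2\in K^\times$, $N(y_2)\ne-1$; (3) $f'={\rm id}+L(y_1)\tau$ with $y_1\in K^\times$, $N(y_1)\ne-1$; (4) $f'={\rm id}$; (5) $f'=L(y_1)\tau+L(y_2)\tau^2$ with $y_1,y_2\in K^\times$, $N(y_2)\ne-N(y_1)$; (6) $f'=L(y_2)\tau^2$ with $y_2\in K^\times$; (7) $f'=L(y_1)\tau$ with $y_1\in K^\times$. Moreover, algebras $K^{(f',g')}$ and $K^{(f'',g'')}$ with $f',f''$ of different forms among (1)–(7) are never isomorphic.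
   Context: $F$ is a field, $V$ a $3$-dimensional $F$-vector space, $K\in{\rm Alg}(V)$ an $F$-algebra structure on $V$ which is a field. $N=N_{K/F}$ and $T=T_{K/F}$ are the field norm and trace. $L(x)$ is the map $y\mapsto xy$. For $f,g\in{\rm End}_F(V)$, $K^{(f,g)}$ is $V$ with product $x\cdot y=f(x)g(y)$. (For reference, the map ${\rm id}\cdot L(y_0)+L(y_1)\tau+L(y_2)\tau^2$ has determinant $N(y_0)+N(y_1)+N(y_2)-T(y_0\tau(y_1)\tau^2(y_2))$.) *)

(* Defs.v *)
From HB Require Import structures.
From mathcomp Require Import all_boot all_order all_algebra all_fingroup all_field.
Set Implicit Arguments. Unset Strict Implicit. Unset Printing Implicit Defensive.
Import GRing.Theory.
Local Open Scope ring_scope.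

Section Defs.
Variables (F : fieldType) (L : splittingFieldType F).

(** Gl(V): invertible F-linear endomorphisms of V = L. *)
Definition isGl (f : 'End(L)) : Prop :=
  exists h : 'End(L), (forall x, f (h x) = x) /\ (forall x, h (f x) = x).

(** K^(f,g) ≅ K^(f',g') as F-algebras: an F-linear bijection phi with
    phi (f x * g y) = f' (phi x) * g' (phi y). *)
Definition alg_iso (f g f' g' : 'End(L)) : Prop :=
  exists phi : 'End(L), isGl phi /\
    forall x y, phi (f x * g y) = f' (phi x) * g' (phi y).

Definition NK (a : L) : L := galNorm 1%VS {:L} a.
Definition TK (a : L) : L := galTrace 1%VS {:L} a.

Definition nform (tau : gal_of {:L}) (k : nat) (f : 'End(L)) : Prop :=
  match k with
  | 1 => exists y1 y2 : L, y1 != 0 /\ y2 != 0 /\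
           NK y1 + NK y2 - TK (tau y1 * tau (tau y2)) != -1 /\
           forall x, f x = x + y1 * tau x + y2 * tau (tau x)
  | 2 => exists y2 : L, y2 != 0 /\ NK y2 != -1 /\
           forall x, f x = x + y2 * tau (tau x)
  | 3 => exists y1 : L, y1 != 0 /\ NK y1 != -1 /\
           forall x, f x = x + y1 * tau x
  | 4 => forall x, f x = x
  | 5 => exists y1 y2 : L, y1 != 0 /\ y2 != 0 /\ NK y2 != - NK y1 /\
           forall x, f x = y1 * tau x + y2 * tau (tau x)
  | 6 => exists y2 : L, y2 != 0 /\ forall x, f x = y2 * tau (tau x)
  | 7 => exists y1 : L, y1 != 0 /\ forall x, f x = y1 * tau x
  | _ => False
  end.
End Defs.

(* Main.v *)
Require Import Defs.
From HB Require Import structures.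
From mathcomp Require Import all_boot all_order all_algebra all_fingroup all_field.
From mathcomp Require Import cyclic ring.
Set Implicit Arguments. Unset Strict Implicit. Unset Printing Implicit Defensive.
Import GRing.Theory.
Local Open Scope ring_scope.
Section S.
Variables (F : fieldType) (L : splittingFieldType F).
Hypothesis hdim : \dim {:L} = 3%N.
Hypothesis hgal : galois 1%VS {:L}.
Variable tau : gal_of {:L}.
Hypothesis htau : ('Gal({:L} / 1%VS) = <[tau]>)%g.

Lemma ord3 : #[tau]%g = 3%N.
Proof.
rewrite /order -htau -galois_dim // hdim dimv1 divn1 //.
Qed.

Lemma tau3 x : tau (tau (tau x)) = x.
Proof.
have e := expg_order tau; rewrite ord3 in e.
have : ((tau ^+ 3)%g x = x) by rewrite e gal_id.
by rewrite !expgS expg0 mulg1 !galM ?memvf.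
Qed.

Lemma tau_neq1 : tau != 1%g.
Proof. by apply/eqP => e; have := ord3; rewrite e order1. Qed.

Lemma tau2_neq1 : (tau * tau)%g != 1%g.
Proof.
apply/eqP => e; have : (#[tau]%g %| 2)%N by rewrite order_dvdn expgS expg1 e.
by rewrite ord3.
Qed.

Lemma tau2_neq : (tau * tau)%g != tau.
Proof.
apply/eqP => e; have : tau = 1%g by apply: (mulgI tau); rewrite mulg1.
by move/eqP; rewrite (negPf tau_neq1).
Qed.

Lemma bigGal (R : Type) (idx : R) (op : Monoid.com_law idx) (G : gal_of {:L} -> R) :
  \big[op/idx]_(y in ('Gal({:L} / 1%VS))%g) G y = op (G 1%g) (op (G tau) (G (tau * tau)%g)).
Proof.
rewrite htau (eq_bigl (fun y => y \in [:: 1%g; tau; (tau * tau)%g])); last first.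
  by move=> y; rewrite cycle_traject ord3 /= mulg1.
rewrite -big_uniq /=; last first.
  rewrite !inE negb_or eq_sym tau_neq1 eq_sym tau2_neq1 eq_sym tau2_neq //.
by rewrite !big_cons big_nil Monoid.mulm1.
Qed.

Lemma NKE (a : L) : NK a = a * tau a * tau (tau a).
Proof.
rewrite /NK /galNorm (bigGal ( *%R%R : Monoid.com_law (1:L))) /= gal_id galM ?memvf //.
by rewrite mulrA.
Qed.

Lemma TKE (a : L) : TK a = a + tau a + tau (tau a).
Proof.
rewrite /TK /galTrace (bigGal (+%R%R : Monoid.com_law (0:L))) /= gal_id galM ?memvf //.
by rewrite addrA.
Qed.

Lemma ded3 (c0 c1 c2 : L) :
  (forall x, c0 * x + c1 * tau x + c2 * tau (tau x) = 0) ->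
  [/\ c0 = 0, c1 = 0 & c2 = 0].
Proof.
move=> H.
pose c_ (y : gal_of {:L}) := if y == 1%g then c0 else if y == tau then c1 else c2.
have H2 : forall y, y \in ('Gal({:L} / 1%VS))%g -> c_ y = 0.
  move=> y; apply: gal_independent => a _.
  rewrite (bigGal (+%R%R : Monoid.com_law (0:L))) /= gal_id galM ?memvf //.
  rewrite /c_ eqxx (negPf tau_neq1) eqxx (negPf tau2_neq1) (negPf tau2_neq).
  by rewrite addrA H.
have G1 : (1%g \in ('Gal({:L} / 1%VS))%g) by apply: group1.
have Gt : (tau \in ('Gal({:L} / 1%VS))%g) by rewrite htau cycle_id.
have Gtt : ((tau * tau)%g \in ('Gal({:L} / 1%VS))%g) by rewrite groupM.
have := H2 _ G1; have := H2 _ Gt; have := H2 _ Gtt.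
rewrite /c_ eqxx (negPf tau_neq1) eqxx (negPf tau2_neq1) (negPf tau2_neq).
by [].
Qed.

Definition mm (a0 a1 a2 : L) (i k : nat) : L :=
  match i, k with
  | 0, 0 => a0 | 0, 1 => a1 | 0, _ => a2
  | 1, 0 => tau a2 | 1, 1 => tau a0 | 1, _ => tau a1
  | _, 0 => tau (tau a1) | _, 1 => tau (tau a2) | _, _ => tau (tau a0)
  end.

Lemma detM (a0 a1 a2 : L) :
  \det (\matrix_(i < 3, k < 3) mm a0 a1 a2 i k) =
  NK a0 + NK a1 + NK a2 - TK (a0 * tau a1 * tau (tau a2)).
Proof.
rewrite (expand_det_row _ ord0) !big_ord_recl big_ord0 /cofactor.
rewrite !(expand_det_row _ ord0) !big_ord_recl big_ord0 /cofactor.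
rewrite !big_ord0 !det_mx11 !mxE /bump /=.
rewrite NKE NKE NKE TKE !rmorphM /= !tau3.
rewrite !expr0 !expr1.
ring.
Qed.

Lemma coef_uniq (a0 a1 a2 b0 b1 b2 : L) :
  (forall x, a0 * x + a1 * tau x + a2 * tau (tau x) =
             b0 * x + b1 * tau x + b2 * tau (tau x)) ->
  [/\ a0 = b0, a1 = b1 & a2 = b2].
Proof.
move=> H.
have [] := @ded3 (a0 - b0) (a1 - b1) (a2 - b2).
  move=> x; transitivity ((a0 * x + a1 * tau x + a2 * tau (tau x)) -
     (b0 * x + b1 * tau x + b2 * tau (tau x))); first by ring.
  by rewrite H subrr.
by move=> /subr0_eq -> /subr0_eq -> /subr0_eq ->.
Qed.

Lemma det_ne0 (f : 'End(L)) (a0 a1 a2 : L) : isGl f ->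
  (forall x, f x = a0 * x + a1 * tau x + a2 * tau (tau x)) ->
  NK a0 + NK a1 + NK a2 - TK (a0 * tau a1 * tau (tau a2)) != 0.
Proof.
move=> [h [fh hf]] fE; apply/negP; rewrite -detM => /det0P [v vn0 vM].
have e k : (v *m \matrix_(i < 3, k < 3) mm a0 a1 a2 i k) 0 k = 0 by rewrite vM mxE.
have e0 := e 0; have e1 := e 1; have e2 := e 2.
rewrite !mxE !big_ord_recl !big_ord0 !mxE /bump /= in e0 e1 e2.
have l0 : ord0 = 0 :> 'I_3 by apply: val_inj.
have l1 : lift ord0 ord0 = 1 :> 'I_3 by apply: val_inj.
have l2 : lift ord0 (lift ord0 ord0) = 2 :> 'I_3 by apply: val_inj.
rewrite l2 l1 l0 !addr0 in e0 e1 e2.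
have hz : forall x, v 0 0 * (f x) + v 0 1 * tau (f x) + v 0 2 * tau (tau (f x)) = 0.
  move=> x; rewrite fE !rmorphD !rmorphM /= !tau3.
  transitivity ((v 0 0 * a0 + (v 0 1 * tau a2 + v 0 2 * tau (tau a1))) * x +
    (v 0 0 * a1 + (v 0 1 * tau a0 + v 0 2 * tau (tau a2))) * tau x +
    (v 0 0 * a2 + (v 0 1 * tau a1 + v 0 2 * tau (tau a0))) * tau (tau x)).
    by ring.
  by rewrite e0 e1 e2; ring.
have [z0 z1 z2] : [/\ v 0 0 = 0, v 0 1 = 0 & v 0 2 = 0].
  by apply: ded3 => y; rewrite -(fh y) hz.
move/eqP: vn0; apply; apply/matrixP => i j; rewrite !mxE.
rewrite (ord1 i); case: j => [[|[|[|j]]] Hj] //.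
- by have -> : Ordinal Hj = 0 by apply: val_inj.
- by have -> : Ordinal Hj = 1 by apply: val_inj.
- by have -> : Ordinal Hj = 2 by apply: val_inj.
Qed.

Definition Phi (p : ((L * L) * L)%type) : 'End(L) :=
  (amull p.1.1 + (amull p.1.2 \o (tau : 'End(L))) +
   (amull p.2 \o ((tau : 'End(L)) \o (tau : 'End(L)))))%VF.

Lemma PhiE p x : Phi p x = p.1.1 * x + p.1.2 * tau x + p.2 * tau (tau x).
Proof. by rewrite /Phi !add_lfunE !comp_lfunE !lfunE. Qed.

Fact Phi_is_linear : linear Phi.
Proof.
move=> k p q; apply/lfunP => x.
rewrite (PhiE (k *: p + q) x) add_lfunE scale_lfunE (PhiE p x) (PhiE q x) /=.
rewrite !mulrDl -!scalerAl !scalerDr.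
set a := k *: (p.1.1 * x); set b := k *: (p.1.2 * tau x).
set c := k *: (p.2 * tau (tau x)).
by ring.
Qed.

HB.instance Definition _ := GRing.isSemilinear.Build F _ _ _ Phi
  (GRing.semilinear_linear Phi_is_linear).

Lemma decomp (f : 'End(L)) : exists a0 a1 a2 : L,
  forall x, f x = a0 * x + a1 * tau x + a2 * tau (tau x).
Proof.
have inj : injective (linfun Phi).
  move=> p q /eqP; rewrite -subr_eq0 -linearB /= lfunE => /eqP H.
  have H0 : forall x, Phi (p - q) x = 0 by move=> x; rewrite H zero_lfunE.
  case: p q H0 {H} => [[p0 p1] p2] [[q0 q1] q2] H0.
  have [] := @ded3 (p0 - q0) (p1 - q1) (p2 - q2).
    by move=> x; rewrite -(H0 x) PhiE.
  by move=> /subr0_eq -> /subr0_eq -> /subr0_eq ->.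
have /lker0P/eqP K0 := inj.
have Hd := limg_ker_dim (linfun Phi) fullv.
rewrite capfv K0 dimv0 add0n !dimvf /= in Hd.
have Eimg : limg (linfun Phi) = fullv.
  apply/eqP; rewrite eqEdim subvf /= Hd !dimvf.
  have dP : dim ((L * L) * L)%type = (dim L + dim L + dim L)%N := erefl.
  have dH : dim 'End(L) = (dim L * dim L)%N := erefl.
  by rewrite dP dH -dimvf hdim.
have : f \in limg (linfun Phi) by rewrite Eimg memvf.
case/memv_imgP => p _ ->; exists p.1.1, p.1.2, p.2 => x.
by rewrite lfunE PhiE.
Qed.

Lemma gal_comm (r : gal_of {:L}) : r \in ('Gal({:L} / 1%VS))%g ->
  forall x, r (tau x) = tau (r x).
Proof.
rewrite htau => /cycleP [i ->] x.
rewrite -!galM ?memvf // -expgS expgSr //.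
Qed.

Lemma support_inv (f' g' f'' g'' : 'End(L)) (a0 a1 a2 b0 b1 b2 : L) :
  isGl f' -> isGl g' -> isGl f'' -> isGl g'' ->
  (forall x, f' x = a0 * x + a1 * tau x + a2 * tau (tau x)) ->
  (forall x, f'' x = b0 * x + b1 * tau x + b2 * tau (tau x)) ->
  alg_iso f' g' f'' g'' ->
  [/\ (a0 == 0) = (b0 == 0), (a1 == 0) = (b1 == 0) & (a2 == 0) = (b2 == 0)].
Proof.
move=> [fi [f'fi fif']] [gi [g'gi gig']] _ _ Ea Eb [u [[ui [uui uiu]] hu]].
pose D c := g'' (u (gi c)).
have key : forall c x, u (f' x * c) = f'' (u x) * D c.
  by move=> c x; rewrite -{1}(g'gi c) hu.
pose d := D 1.
pose b := u 1.
have bn0 : b != 0.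
  apply/eqP => b0'; have := uiu 1; rewrite -/b b0' linear0 => /eqP.
  by rewrite eq_sym oner_eq0.
have key1 : forall x, u (f' x) = f'' (u x) * d by move=> x; rewrite -key mulr1.
have dn0 : d != 0.
  apply/eqP => d0; move: bn0; rewrite /b -(f'fi 1) key1 d0 mulr0 eqxx //.
have mulw : forall w c, u (w * c) * d = u w * D c.
  move=> w c; rewrite -(f'fi w) key key1; ring.
have Dc : forall c, D c = u c * d / b.
  move=> c; have := mulw 1 c; rewrite mul1r -/b => e.
  by rewrite e mulrAC mulfV // mul1r.
have um : forall w c, u (w * c) = u w * u c / b.
  move=> w c; apply: (mulIf dn0); rewrite mulw Dc; field; exact: bn0.
pose sg : 'End(L) := (amull (b^-1)%R \o u)%VF.
have sgE : forall c, sg c = b^-1 * u c by move=> c; rewrite comp_lfunE lfunE.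
have sgm : monoid_morphism sg.
  split; first by rewrite sgE -/b mulVf.
  move=> x y; rewrite !sgE um; field; exact: bn0.
have : kAut 1 {:L} sg by rewrite kAutfE; apply/kHom_monoid_morphism.
case/kAut_to_gal => r rG rE.
have uE : forall c, u c = b * r c.
  by move=> c; rewrite -rE ?memvf // sgE mulrA mulfV // mul1r.
have rc := gal_comm rG.
have rinv : forall z, r ((r^-1)%g z) = z.
  by move=> z; rewrite -galM ?memvf // mulVg gal_id.
have H : forall z, (b * r a0) * z + (b * r a1) * tau z + (b * r a2) * tau (tau z) =
   (d * b0 * b) * z + (d * b1 * tau b) * tau z + (d * b2 * tau (tau b)) * tau (tau z).
  move=> z; have := key1 ((r^-1)%g z).
  rewrite Ea Eb !uE !rmorphD !rmorphM /= !rc !rinv.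
  move=> e; transitivity (b * (r a0 * z + r a1 * tau z + r a2 * tau (tau z))).
    by ring.
  rewrite e; ring.
have [e0 e1 e2] := coef_uniq H.
have rz : forall a : L, (r a == 0) = (a == 0) by move=> a; rewrite fmorph_eq0.
split.
- by rewrite -rz -(mulrI_eq0 _ (lregP bn0)) e0 !mulf_eq0 (negPf dn0) (negPf bn0) /= orbF.
- rewrite -rz -(mulrI_eq0 _ (lregP bn0)) e1 !mulf_eq0 (negPf dn0) /= fmorph_eq0.
  by rewrite (negPf bn0) orbF.
- rewrite -rz -(mulrI_eq0 _ (lregP bn0)) e2 !mulf_eq0 (negPf dn0) /= !fmorph_eq0.
  by rewrite (negPf bn0) orbF.
Qed.

Definition pat (k : nat) : bool * bool * bool :=
  match k with
  | 1 => (true, true, true) | 2 => (true, false, true)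
  | 3 => (true, true, false) | 4 => (true, false, false)
  | 5 => (false, true, true) | 6 => (false, false, true)
  | 7 => (false, true, false) | _ => (false, false, false)
  end%N.

Lemma pat_inj i j : (1 <= i <= 7)%N -> (1 <= j <= 7)%N -> pat i = pat j -> i = j.
Proof.
by case: i => [|[|[|[|[|[|[|[|i]]]]]]]]; case: j => [|[|[|[|[|[|[|[|j]]]]]]]].
Qed.

Lemma nform_pat k (f : 'End(L)) : nform tau k f ->
  (1 <= k <= 7)%N /\ exists a0 a1 a2 : L,
    (forall x, f x = a0 * x + a1 * tau x + a2 * tau (tau x)) /\
    (a0 != 0, a1 != 0, a2 != 0) = pat k.
Proof.
case: k => [|[|[|[|[|[|[|[|k]]]]]]]] //=.
- case=> y1 [y2 [h1 [h2 [_ fE]]]]; split => //; exists 1, y1, y2.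
  by split; [move=> x; rewrite fE mul1r | rewrite oner_neq0 h1 h2].
- case=> y2 [h2 [_ fE]]; split => //; exists 1, 0, y2.
  by split; [move=> x; rewrite fE mul1r mul0r addr0 | rewrite oner_neq0 eqxx h2].
- case=> y1 [h1 [_ fE]]; split => //; exists 1, y1, 0.
  by split; [move=> x; rewrite fE mul1r mul0r addr0 | rewrite oner_neq0 eqxx h1].
- move=> fE; split => //; exists 1, 0, 0.
  by split; [move=> x; rewrite fE mul1r !mul0r !addr0 | rewrite oner_neq0 eqxx].
- case=> y1 [y2 [h1 [h2 [_ fE]]]]; split => //; exists 0, y1, y2.
  by split; [move=> x; rewrite fE mul0r add0r | rewrite eqxx h1 h2].
- case=> y2 [h2 fE]; split => //; exists 0, 0, y2.
  by split; [move=> x; rewrite fE !mul0r !add0r | rewrite eqxx h2].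
- case=> y1 [h1 fE]; split => //; exists 0, y1, 0.
  by split; [move=> x; rewrite fE !mul0r add0r addr0 | rewrite eqxx h1].
Qed.

Lemma uniq_k k k' (f : 'End(L)) : nform tau k f -> nform tau k' f -> k' = k.
Proof.
case/nform_pat => hk [a0 [a1 [a2 [Ea Pa]]]].
case/nform_pat => hk' [b0 [b1 [b2 [Eb Pb]]]].
have [e0 e1 e2] : [/\ b0 = a0, b1 = a1 & b2 = a2].
  by apply: coef_uniq => x; rewrite -Ea -Eb.
by apply: pat_inj => //; rewrite -Pa -Pb e0 e1 e2.
Qed.

Lemma aux1 (x y z : L) : x + y - z = -1 -> 1 + x + y - z = 0.
Proof. move=> e; have -> : 1 + x + y - z = 1 + (x + y - z) by ring. by rewrite e subrr. Qed.

Lemma classify (f : 'End(L)) (a0 a1 a2 : L) : isGl f ->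
  (forall x, f x = a0 * x + a1 * tau x + a2 * tau (tau x)) ->
  a0 = 1 \/ a0 = 0 -> exists k, (1 <= k <= 7)%N /\ nform tau k f.
Proof.
move=> Gf fE ha0; have dn := det_ne0 Gf fE.
move: dn; rewrite /NK /TK => dn.
case: ha0 => ha0; subst a0; rewrite ?galNorm1 ?galNorm0 in dn.
- have [a1z|a1n] := eqVneq a1 0; have [a2z|a2n] := eqVneq a2 0; subst.
  + exists 4%N; split => // x; by rewrite fE mul1r !mul0r !addr0.
  + exists 2%N; split => //; exists a2; split => //; split.
      apply/eqP => e; move: dn; rewrite /NK in e.
      by rewrite rmorph0 mulr0 mul0r raddf0 galNorm0 e addr0 subr0 subrr eqxx.
    by move=> x; rewrite fE mul1r mul0r addr0.
  + exists 3%N; split => //; exists a1; split => //; split.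
      apply/eqP => e; move: dn; rewrite /NK in e.
      by rewrite !rmorph0 !mulr0 raddf0 galNorm0 e addr0 subr0 subrr eqxx.
    by move=> x; rewrite fE mul1r mul0r addr0.
  + exists 1%N; split => //; exists a1, a2; do 2! split => //; split.
      apply/eqP => e; move: dn; rewrite /NK /TK in e.
      by rewrite mul1r aux1 ?eqxx.
    by move=> x; rewrite fE mul1r.
- have [a1z|a1n] := eqVneq a1 0; have [a2z|a2n] := eqVneq a2 0; subst.
  + case: Gf => h [fh _]; have := fh 1; rewrite fE !mul0r !addr0 => /eqP.
    by rewrite eq_sym oner_eq0.
  + exists 6%N; split => //; exists a2; split => // x.
    by rewrite fE !mul0r !add0r.
  + exists 7%N; split => //; exists a1; split => // x.
    by rewrite fE !mul0r add0r addr0.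
  + exists 5%N; split => //; exists a1, a2; do 2! split => //; split.
      apply/eqP => e; move: dn; rewrite /NK in e.
      by rewrite !mul0r raddf0 subr0 add0r e subrr eqxx.
    by move=> x; rewrite fE mul0r add0r.
Qed.

Lemma isGl_id : isGl (\1%VF : 'End(L)).
Proof. by exists \1%VF; split => x; rewrite !id_lfunE. Qed.

Lemma isGl_scale (f : 'End(L)) (c : L) : c != 0 -> isGl f ->
  isGl (amull c \o f)%VF.
Proof.
move=> cn0 [h [fh hf]]; exists (h \o amull c^-1%R)%VF; split => x.
  by rewrite !comp_lfunE !lfunE /= fh mulVKf.
by rewrite !comp_lfunE !lfunE /= mulKf.
Qed.

Lemma main_sec :
  (forall f g : 'End(L), isGl f -> isGl g ->
     exists f' g' : 'End(L), isGl f' /\ isGl g' /\ alg_iso f g f' g' /\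
       exists k : nat, (1 <= k <= 7)%N /\ nform tau k f' /\
         (forall k', nform tau k' f' -> k' = k)) /\
  (forall (f' g' f'' g'' : 'End(L)) (i j : nat),
     isGl f' -> isGl g' -> isGl f'' -> isGl g'' ->
     nform tau i f' -> nform tau j f'' -> i <> j ->
     ~ alg_iso f' g' f'' g'').
Proof.
split.
  move=> f g Gf Gg; have [a0 [a1 [a2 fE]]] := decomp f.
  have [a0z|a0n] := eqVneq a0 0.
    have [k [hk nk]] := classify Gf fE (or_intror a0z).
    exists f, g; do 2! split => //; split.
      by exists \1%VF; split; [exact: isGl_id | move=> x y; rewrite !id_lfunE].
    by exists k; do 2! split => //; move=> k' nk'; apply: uniq_k nk nk'.
  have Gf' := isGl_scale (invr_neq0 a0n) Gf.
  have fE' : forall x, (amull a0^-1%R \o f)%VF x =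
      1 * x + (a0^-1 * a1) * tau x + (a0^-1 * a2) * tau (tau x).
    by move=> x; rewrite comp_lfunE lfunE /= fE !mulrDr !mulrA mulVf.
  have [k [hk nk]] := classify Gf' fE' (or_introl erefl).
  exists (amull a0^-1%R \o f)%VF, (amull a0 \o g)%VF.
  split => //; split; first exact: isGl_scale.
  split.
    exists \1%VF; split; first exact: isGl_id.
    move=> x y; rewrite !id_lfunE !comp_lfunE !lfunE /=.
    by rewrite mulrACA mulVf // mul1r.
  by exists k; do 2! split => //; move=> k' nk'; apply: uniq_k nk nk'.
move=> f' g' f'' g'' i j Gf' Gg' Gf'' Gg'' ni nj ij iso.
have [hi [a0 [a1 [a2 [Ea Pa]]]]] := nform_pat ni.
have [hj [b0 [b1 [b2 [Eb Pb]]]]] := nform_pat nj.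
have [e0 e1 e2] := support_inv Gf' Gg' Gf'' Gg'' Ea Eb iso.
apply: ij; apply: pat_inj => //.
by rewrite -Pa -Pb -e0 -e1 -e2.
Qed.
End S.


Theorem mainTheorem14 (F : fieldType) (L : splittingFieldType F)
    (hdim : \dim {:L} = 3%N) (hgal : galois 1%VS {:L})
    (tau : gal_of {:L}) (htau : ('Gal({:L} / 1%VS) = <[tau]>)%g) :
  (forall f g : 'End(L), isGl f -> isGl g ->
     exists f' g' : 'End(L), isGl f' /\ isGl g' /\ alg_iso f g f' g' /\
       exists k : nat, (1 <= k <= 7)%N /\ nform tau k f' /\
         (forall k', nform tau k' f' -> k' = k)) /\
  (forall (f' g' f'' g'' : 'End(L)) (i j : nat),
     isGl f' -> isGl g' -> isGl f'' -> isGl g'' ->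
     nform tau i f' -> nform tau j f'' -> i <> j ->
     ~ alg_iso f' g' f'' g'').
Proof. exact: (main_sec hdim hgal htau). Qed.
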